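(* Let $f:\mathbb{R}^d\to\mathbb{R}$ be convex and $M$-Lipschitz, i.e. $|f(x)-f(y)|\le M\|x-y\|$ for all $x,y$, and suppose $X^*\neq\emptyset$. Run the Proximal Bundle Method with parameter $\beta\in(0,1)$ and constant stepsize $\rho_k=\rho>0$ for all $k$. Let $D^2=\sup_k \mathrm{dist}(x_k,X^* )^2$ and assume $0<D^2<\infty$. Then for any $0<\epsilon\le f(x_0)-f^*$, the number of descent steps taken before the first iterate $x_k$ with $f(x_k)-f^*\le\epsilon$ is found is at most $$\frac{2\rho D^2}{\beta\epsilon}+\left\lceil \frac{2\log\left(\frac{f(x_0)-f^*}{\rho D^2}\right)}{\beta}\right\rceil_+,$$ and the number of null steps taken before then is at most $$\frac{48\rho M^2D^4}{\beta(1-\beta)^2\epsilon^3}+\frac{32M^2}{\beta(1-\beta)^2\rho^2D^2}.$$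
   Context: Throughout, $f:\mathbb{R}^d\to\mathbb{R}$ is a proper closed convex function attaining its minimum $f^*=\inf f$ on the nonempty set $X^*=\{x: f(x)=f^*\}$; $\mathrm{dist}(x,S)=\inf_{y\in S}\|x-y\|$; $\partial f(x)$ is the convex subdifferential; $\lceil a\rceil_+=\max\{\lceil a\rceil,0\}$. A subgradient oracle returns, for any $x$, the value $f(x)$ and some $g(x)\in\partial f(x)$. Proximal Bundle Method: fix $\beta\in(0,1)$, $x_0=z_0\in\mathbb{R}^d$, $g_0=g(x_0)$, and the initial model $f_0(x)=f(x_0)+\langle g_0,x-x_0\rangle$. At iteration $k\ge0$, given a convex model $f_k:\mathbb{R}^d\to\mathbb{R}$ and stepsize $\rho_k>0$, compute $z_{k+1}=\operatorname{argmin}_z f_k(z)+\frac{\rho_k}{2}\|z-x_k\|^2$. If $\beta(f(x_k)-f_k(z_{k+1}))\le f(x_k)-f(z_{k+1})$, iteration $k$ is a descent step and $x_{k+1}=z_{k+1}$; otherwise it is a null step and $x_{k+1}=x_k$. Then a new convex model $f_{k+1}$ and stepsize $\rho_{k+1}$ are chosen satisfying, with $g_{k+1}=g(z_{k+1})$ and $s_{k+1}=\rho_k(x_k-z_{k+1})$: (1) $f_{k+1}(x)\le f(x)$ for all $x$; (2) $f_{k+1}(x)\ge f(z_{k+1})+\langle g_{k+1},x-z_{k+1}\rangle$ for all $x$; (3) if iteration $k$ was a null step, $f_{k+1}(x)\ge f_k(z_{k+1})+\langle s_{k+1},x-z_{k+1}\rangle$ for all $x$; (4) if iteration $k$ was a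 null step, $\rho_{k+1}\ge\rho_k$. An $\epsilon$-minimizer is a point $x$ with $f(x)-f^*\le\epsilon$. *)

(* Defs.v *)
(* R^d is modelled as row vectors 'rV[R]_d. *)
From mathcomp Require Import all_boot all_order all_algebra.
From mathcomp Require Import all_classical all_reals all_analysis.
Set Implicit Arguments. Unset Strict Implicit. Unset Printing Implicit Defensive.
Import Order.TTheory GRing.Theory Num.Theory.
Local Open Scope ring_scope.
Local Open Scope classical_set_scope.

Definition dotp (R : realType) (d : nat) (u v : 'rV[R]_d) : R :=
  \sum_(i < d) u 0 i * v 0 i.
Definition enorm (R : realType) (d : nat) (u : 'rV[R]_d) : R :=
  Num.sqrt (dotp u u).

Definition convex_fun (R : realType) (d : nat) (f : 'rV[R]_d -> R) : Prop :=
  forall (x y : 'rV[R]_d) (t : R), 0 <= t -> t <= 1 ->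
    f (t *: x + (1 - t) *: y) <= t * f x + (1 - t) * f y.

Definition lipschitz_with (R : realType) (d : nat) (f : 'rV[R]_d -> R) (M : R) : Prop :=
  forall x y, `|f x - f y| <= M * enorm (x - y).

Definition is_subgrad (R : realType) (d : nat) (f : 'rV[R]_d -> R) (x g : 'rV[R]_d) : Prop :=
  forall y, f x + dotp g (y - x) <= f y.

Definition argmin_set (R : realType) (d : nat) (f : 'rV[R]_d -> R) : set 'rV[R]_d :=
  [set y | forall w, f y <= f w].

Definition dist_set (R : realType) (d : nat) (x : 'rV[R]_d) (S : set 'rV[R]_d) : R :=
  inf [set enorm (x - y) | y in S].

Definition ceil_pos (R : realType) (a : R) : R :=
  (Order.max (Num.ceil a) 0%Z)%:~R.

(* A run of the Proximal Bundle Method with constant stepsize rho: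
   iterates x, candidate points z, models fm, oracle subgradient map orc. *)
Definition descent_step (R : realType) (d : nat) (f : 'rV[R]_d -> R) (beta : R)
  (x z : nat -> 'rV[R]_d) (fm : nat -> 'rV[R]_d -> R) (k : nat) : bool :=
  beta * (f (x k) - fm k (z k.+1)) <= f (x k) - f (z k.+1).

Definition PBM_run (R : realType) (d : nat) (f : 'rV[R]_d -> R)
  (orc : 'rV[R]_d -> 'rV[R]_d) (beta rho : R) (x0 : 'rV[R]_d)
  (x z : nat -> 'rV[R]_d) (fm : nat -> 'rV[R]_d -> R) : Prop :=
  [/\ (x 0%N = x0 /\ z 0%N = x0),
      (forall y, fm 0%N y = f x0 + dotp (orc x0) (y - x0)),
      (forall k, convex_fun (fm k)) /\
      (forall k w, fm k (z k.+1) + rho / 2 * enorm (z k.+1 - x k) ^+ 2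
                   <= fm k w + rho / 2 * enorm (w - x k) ^+ 2),
      (forall k, x k.+1 = if descent_step f beta x z fm k then z k.+1 else x k) &
      (* model conditions (1)-(3); (4) holds trivially as rho_k = rho *)
      [/\ (forall k y, fm k y <= f y),
          (forall k y, f (z k.+1) + dotp (orc (z k.+1)) (y - z k.+1) <= fm k.+1 y) &
          (forall k y, ~~ descent_step f beta x z fm k ->
             fm k (z k.+1) + dotp (rho *: (x k - z k.+1)) (y - z k.+1) <= fm k.+1 y)]].

Definition n_descent (R : realType) (d : nat) (f : 'rV[R]_d -> R) (beta : R)
  (x z : nat -> 'rV[R]_d) (fm : nat -> 'rV[R]_d -> R) (K : nat) : nat :=
  #|[set k : 'I_K | descent_step f beta x z fm k]|.
Definition n_null (R : realType) (d : nat) (f : 'rV[R]_d -> R) (beta : R)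
  (x z : nat -> 'rV[R]_d) (fm : nat -> 'rV[R]_d -> R) (K : nat) : nat :=
  #|[set k : 'I_K | ~~ descent_step f beta x z fm k]|.

(* Main.v *)
Require Import Defs.
Set Warnings "-all".
Set Implicit Arguments. Unset Strict Implicit.
From mathcomp Require Import all_boot all_order all_algebra.
From mathcomp Require Import all_classical all_reals all_analysis.
From mathcomp Require Import ring lra.
Import Order.TTheory GRing.Theory Num.Theory.
Local Open Scope ring_scope.

Lemma dotpC (R : realType) (d : nat) (u v : 'rV[R]_d) : dotp u v = dotp v u.
Proof. by rewrite /dotp; apply: eq_bigr => i _; rewrite mulrC. Qed.
Lemma dotpDl (R : realType) (d : nat) (u v w : 'rV[R]_d) :
  dotp (u + v) w = dotp u w + dotp v w.
Proof. by rewrite /dotp -big_split; apply: eq_bigr => i _; rewrite mxE mulrDl. Qed.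
Lemma dotpZl (R : realType) (d : nat) (a : R) (u v : 'rV[R]_d) :
  dotp (a *: u) v = a * dotp u v.
Proof. by rewrite /dotp mulr_sumr; apply: eq_bigr => i _; rewrite mxE mulrA. Qed.
Lemma dotpNl (R : realType) (d : nat) (u v : 'rV[R]_d) : dotp (- u) v = - dotp u v.
Proof. by rewrite -scaleN1r dotpZl mulN1r. Qed.
Lemma dotpBl (R : realType) (d : nat) (u v w : 'rV[R]_d) :
  dotp (u - v) w = dotp u w - dotp v w.
Proof. by rewrite dotpDl dotpNl. Qed.
Lemma dotpDr (R : realType) (d : nat) (u v w : 'rV[R]_d) :
  dotp w (u + v) = dotp w u + dotp w v.
Proof. by rewrite dotpC dotpDl !(dotpC w). Qed.
Lemma dotpZr (R : realType) (d : nat) (a : R) (u v : 'rV[R]_d) :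
  dotp v (a *: u) = a * dotp v u.
Proof. by rewrite dotpC dotpZl dotpC. Qed.
Lemma dotpBr (R : realType) (d : nat) (u v w : 'rV[R]_d) :
  dotp w (u - v) = dotp w u - dotp w v.
Proof. by rewrite dotpC dotpBl !(dotpC w). Qed.
Lemma dotp_ge0 (R : realType) (d : nat) (u : 'rV[R]_d) : 0 <= dotp u u.
Proof. by rewrite /dotp; apply: sumr_ge0 => i _; rewrite -expr2 sqr_ge0. Qed.
Lemma enorm_sq (R : realType) (d : nat) (u : 'rV[R]_d) : enorm u ^+ 2 = dotp u u.
Proof. by rewrite /enorm sqr_sqrtr // dotp_ge0. Qed.
Lemma enorm_ge0 (R : realType) (d : nat) (u : 'rV[R]_d) : 0 <= enorm u.
Proof. by rewrite /enorm sqrtr_ge0. Qed.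
Lemma enormZ (R : realType) (d : nat) (t : R) (u : 'rV[R]_d) : 0 <= t ->
  enorm (t *: u) = t * enorm u.
Proof.
move=> t0; rewrite /enorm dotpZl dotpZr mulrA -expr2 sqrtrM ?sqr_ge0 //.
by rewrite sqrtr_sqr ger0_norm.
Qed.
Lemma nsqD (R : realType) (d : nat) (u v : 'rV[R]_d) :
  dotp (u + v) (u + v) = dotp u u + 2 * dotp u v + dotp v v.
Proof. rewrite dotpDl !dotpDr (dotpC v u); ring. Qed.

Definition mf (R : realType) (P D : R) : R := if D <= P then D ^+ 2 / (2 * P) else D / 2.
Definition Uf (R : realType) (P eps beta kap D : R) : R :=
  if D <= P then (2 * P * kap / eps ^+ 2) * ((eps^-1 - D^-1) * (2 * P / beta) + 1)
  else 4 * P ^+ 2 * kap / (beta * eps ^+ 3) + (4 * kap / beta) * (P^-1 - D^-1) + 2 * kap * D^-1.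

Lemma mf_gt0 (R : realType) (P D : R) : 0 < P -> 0 < D -> 0 < mf P D.
Proof.
move=> P0 D0; rewrite /mf; case: ifP => _.
  by apply: divr_gt0; [rewrite exprn_gt0 | rewrite mulr_gt0].
by apply: divr_gt0.
Qed.

Lemma invle (R : realType) (a b : R) : 0 < a -> a <= b -> b^-1 <= a^-1.
Proof. move=> a0 ab; rewrite lef_pV2 ?posrE //; exact: lt_le_trans ab. Qed.

Lemma U1_le_B0 (R : realType) (P eps beta kap D : R) :
  0 < P -> 0 < eps -> 0 < beta -> beta < 1 -> 0 < kap -> 0 < D -> D <= P ->
  (2 * P * kap / eps ^+ 2) * ((eps^-1 - D^-1) * (2 * P / beta) + 1)
    <= 4 * P ^+ 2 * kap / (beta * eps ^+ 3).
Proof.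
move=> P0 e0 b0 b1 k0 D0 DP.
have hu := invle D0 DP.
have c1 : 0 <= 2 * P * kap / eps ^+ 2 by apply: divr_ge0; [nra | rewrite exprn_ge0 // ltW].
have k1 : 0 <= 2 * P / beta by apply: divr_ge0; lra.
have pk : P^-1 * (2 * P / beta) = 2 / beta by field; lra.
have h : (eps^-1 - D^-1) * (2 * P / beta) + 1 <= eps^-1 * (2 * P / beta).
  have : 1 <= 2 / beta by rewrite ler_pdivlMr //; lra.
  have := ler_wpM2r k1 hu. nra.
apply: le_trans (ler_wpM2l c1 h) _.
rewrite le_eqVlt; apply/orP; left; apply/eqP; field; lra.
Qed.

Lemma U_pos (R : realType) (P eps beta kap D : R) :
  0 < P -> 0 < eps -> 0 < beta -> beta < 1 -> 0 < kap -> eps < D ->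
  kap / mf P D <= Uf P eps beta kap D.
Proof.
move=> P0 e0 b0 b1 k0 eD.
have D0 : 0 < D by lra.
rewrite /mf /Uf; case: ifP => DP.
  have hu := invle e0 (ltW eD).
  have k1 : 0 <= 2 * P / beta by apply: divr_ge0; lra.
  have c1 : 0 <= 2 * P * kap / eps ^+ 2 by apply: divr_ge0; [nra | rewrite exprn_ge0 // ltW].
  have h1 : 1 <= (eps^-1 - D^-1) * (2 * P / beta) + 1.
    have : 0 <= (eps^-1 - D^-1) by lra. nra.
  apply: le_trans (_ : 2 * P * kap / eps ^+ 2 <= _); last first.
    by rewrite -{1}(mulr1 (2 * P * kap / eps ^+ 2)) ler_wpM2l.
  have -> : kap / (D ^+ 2 / (2 * P)) = 2 * P * kap * (D^-1) ^+ 2 by field; lra.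
  rewrite /(_ / _) -exprVn; apply: ler_wpM2l; first nra.
  rewrite lerXn2r ?nnegrE ?invr_ge0 //; lra.
have hu : D^-1 <= P^-1 by apply: invle => //; rewrite ltW // ltNge DP.
have B0 : 0 <= 4 * P ^+ 2 * kap / (beta * eps ^+ 3).
  apply: divr_ge0; first nra. by rewrite mulr_ge0 ?exprn_ge0 // ltW.
have -> : kap / (D / 2) = 2 * kap * D^-1 by field; lra.
have : 0 <= 4 * kap / beta by apply: divr_ge0; lra.
nra.
Qed.

Lemma U_bnd (R : realType) (P eps beta kap D : R) :
  0 < P -> 0 < eps -> 0 < beta -> beta < 1 -> 0 < kap -> eps < D ->
  Uf P eps beta kap D <= 4 * P ^+ 2 * kap / (beta * eps ^+ 3) + 4 * kap / (beta * P).
Proof.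
move=> P0 e0 b0 b1 k0 eD.
have D0 : 0 < D by lra.
have h2 : 0 <= 4 * kap / (beta * P) by apply: divr_ge0; nra.
rewrite /Uf; case: ifP => DP.
  have := U1_le_B0 P0 e0 b0 b1 k0 D0 DP. lra.
have hu : 0 <= D^-1 by rewrite invr_ge0 ltW.
have -> : 4 * kap / (beta * P) = (4 * kap / beta) * P^-1 by field; lra.
have : 2 * kap <= 4 * kap / beta by rewrite ler_pdivlMr //; nra.
nra.
Qed.

Lemma U_desc (R : realType) (P eps beta kap D D' : R) :
  0 < P -> 0 < eps -> 0 < beta -> beta < 1 -> 0 < kap -> eps < D -> 0 < D' ->
  D' <= D - beta * mf P D ->
  Uf P eps beta kap D' <= Uf P eps beta kap D - kap / mf P D.
Proof.
move=> P0 e0 b0 b1 k0 eD D'0 hD.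
have D0 : 0 < D by lra.
have m0 := mf_gt0 P0 D0.
have D'D : D' <= D by nra.
move: hD; case DP: (D <= P).
  have D'P : D' <= P by exact: le_trans DP.
  rewrite /Uf /mf DP D'P => hD.
  have K1 : D^-1 + beta / (2 * P) <= D'^-1.
    have -> : D^-1 + beta / (2 * P) = (2 * P + beta * D) / (2 * P * D) by field; lra.
    rewrite ler_pdivrMr; last nra.
    apply: le_trans (_ : D'^-1 * (D' * (2 * P + beta * D)) <= _).
      by rewrite mulrA mulVf ?mul1r // lt0r_neq0.
    apply: ler_wpM2l; first by rewrite invr_ge0 ltW.
    suff : D' * (2 * P) <= 2 * P * D - beta * D ^+ 2.
      have : D' * (beta * D) <= D * (beta * D) by apply: ler_wpM2r => //; nra.
      nra.
    move: hD; have -> : D - beta * (D ^+ 2 / (2 * P)) = (2 * P * D - beta * D ^+ 2) / (2 * P)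
      by field; lra.
    by rewrite ler_pdivlMr //; nra.
  have c1 : 0 < 2 * P * kap / eps ^+ 2 by apply: divr_gt0; [nra | rewrite exprn_gt0].
  have hk : beta / (2 * P) * (2 * P / beta) = 1 by field; lra.
  have k1 : 0 <= 2 * P / beta by apply: divr_ge0; lra.
  have hu := invle e0 (ltW eD).
  have -> : kap / (D ^+ 2 / (2 * P)) = 2 * P * kap * (D^-1) ^+ 2 by field; lra.
  have h3 : 2 * P * kap * (D^-1) ^+ 2 <= 2 * P * kap / eps ^+ 2.
    rewrite /(_ / (eps ^+ 2)) -exprVn; apply: ler_wpM2l; first nra.
    rewrite lerXn2r ?nnegrE ?invr_ge0 //; try lra.
  have hh := ler_wpM2r k1 K1.
  rewrite mulrDl hk in hh.
  set c := 2 * P * kap / eps ^+ 2 in c1 h3 *. set k := 2 * P / beta in hh k1 *.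
  suff : c * ((eps^-1 - D'^-1) * k + 1) <= c * ((eps^-1 - D^-1) * k + 1) - c by lra.
  have : c * (D^-1 * k + 1) <= c * (D'^-1 * k) by apply: ler_wpM2l; lra.
  nra.
have PD : P < D by rewrite ltNge DP.
rewrite /Uf /mf DP => hD.
have -> : kap / (D / 2) = 2 * kap * D^-1 by field; lra.
have hu : D^-1 <= P^-1 by apply: invle => //; rewrite ltW.
have b4 : 0 <= 4 * kap / beta by apply: divr_ge0; lra.
case: ifP => D'P.
  have := U1_le_B0 P0 e0 b0 b1 k0 D'0 D'P. nra.
have PD' : P < D' by rewrite ltNge D'P.
have K2 : 2 * D^-1 <= (2 - beta) * D'^-1.
  rewrite -/((2 - beta) / D').
  rewrite ler_pdivlMr // mulrAC ler_pdivrMr //; nra.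
have : 2 * kap / beta * (2 * D^-1) <= 2 * kap / beta * ((2 - beta) * D'^-1).
  apply: ler_wpM2l => //; apply: divr_ge0; lra.
have -> : 2 * kap / beta * (2 * D^-1) = 4 * kap / beta * D^-1 by ring.
have -> : 2 * kap / beta * ((2 - beta) * D'^-1) = 4 * kap / beta * D'^-1 - 2 * kap * D'^-1.
  by field; lra.
lra.
Qed.

Lemma ceil_pos_ge0 (R : realType) (L : R) : 0 <= ceil_pos L.
Proof. by rewrite /ceil_pos ler0z le_max lexx orbT. Qed.

Lemma ceil_pos_S (R : realType) (L : R) (n : nat) : n%:R < L -> n.+1%:R <= ceil_pos L.
Proof.
move=> h.
have h1 : (n%:Z < Num.ceil L)%R by rewrite ceil_gt_int.
have h2 : (n%:Z + 1 <= Num.ceil L)%R by rewrite lezD1.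
have -> : (n.+1)%:R = ((n.+1)%:Z)%:~R :> R by [].
rewrite /ceil_pos ler_int -addn1 PoszD.
by apply: le_trans h2 _; rewrite le_max lexx.
Qed.

Lemma card_sum (K : nat) (p : nat -> bool) :
  #|[set k : 'I_K | p k]| = (\sum_(i < K) p i)%N.
Proof.
rewrite -sum1_card big_mkcond /=; apply: eq_bigr => i _.
by rewrite inE; case: (p i).
Qed.

Lemma sum_compl (K : nat) (p : nat -> bool) :
  (\sum_(i < K) p i + \sum_(i < K) ~~ p i)%N = K.
Proof.
rewrite -big_split /=.
rewrite (eq_bigr (fun _ => 1%N)); last by move=> i _; rewrite addnC addn_negb.
by rewrite sum1_card card_ord.
Qed.

Lemma K1 (R : realType) (P beta D D' : R) : 0 < P -> 0 < beta -> 0 < D -> 0 < D' ->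
  D' <= D - beta * (D ^+ 2 / (2 * P)) -> D^-1 + beta / (2 * P) <= D'^-1.
Proof.
move=> P0 b0 D0 D'0 hD.
have D'D : D' <= D.
  have : 0 <= beta * (D ^+ 2 / (2 * P)) by apply: mulr_ge0; [lra| apply: divr_ge0; nra].
  lra.
have -> : D^-1 + beta / (2 * P) = (2 * P + beta * D) / (2 * P * D) by field; lra.
rewrite ler_pdivrMr; last nra.
apply: le_trans (_ : D'^-1 * (D' * (2 * P + beta * D)) <= _).
  by rewrite mulrA mulVf ?mul1r // lt0r_neq0.
apply: ler_wpM2l; first by rewrite invr_ge0 ltW.
suff : D' * (2 * P) <= 2 * P * D - beta * D ^+ 2.
  have : D' * (beta * D) <= D * (beta * D) by apply: ler_wpM2r => //; nra.
  nra.
move: hD; have -> : D - beta * (D ^+ 2 / (2 * P)) = (2 * P * D - beta * D ^+ 2) / (2 * P)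
  by field; lra.
by rewrite ler_pdivlMr //; nra.
Qed.

Lemma null_inv (R : realType) (kap G G' : R) : 0 < kap -> 0 < G -> 0 < G' ->
  G ^+ 2 <= kap * (G - G') -> kap / G + 1 <= kap / G'.
Proof.
move=> k0 G0 G'0 h.
have GG : G' <= G by nra.
rewrite ler_pdivlMr // mulrDl mul1r.
have -> : kap / G * G' = kap * G' / G by rewrite mulrAC.
suff : kap * G' / G <= kap - G' by lra.
rewrite ler_pdivrMr //; nra.
Qed.

Lemma pbm_counting (R : realType) (P eps beta kap : R) (Dl G : nat -> R) (desc : nat -> bool) :
  0 < P -> 0 < eps -> 0 < beta -> beta < 1 -> 0 < kap ->
  (forall k, mf P (Dl k) <= G k) ->
  (forall k, desc k -> Dl k.+1 <= Dl k - beta * G k) ->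
  (forall k, ~~ desc k -> Dl k.+1 = Dl k /\ G k ^+ 2 <= kap * (G k - G k.+1)) ->
  exists K, [/\ Dl K <= eps, (forall k, (k < K)%N -> eps < Dl k),
     (#|[set k : 'I_K | desc k]|)%:R
        <= 2 * P / (beta * eps) + ceil_pos (2 * ln (Dl 0%N / P) / beta) &
     (#|[set k : 'I_K | ~~ desc k]|)%:R
        <= 4 * P ^+ 2 * kap / (beta * eps ^+ 3) + 4 * kap / (beta * P)].
Proof.
move=> P0 e0 b0 b1 k0 Hm Hd Hn.
set nd := fun k => (\sum_(i < k) desc i)%N.
set nn := fun k => (\sum_(i < k) ~~ desc i)%N.
set C := ceil_pos (2 * ln (Dl 0%N / P) / beta).
set U0 := 4 * P ^+ 2 * kap / (beta * eps ^+ 3) + 4 * kap / (beta * P).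
set U := Uf P eps beta kap.
have C0 : 0 <= C by exact: ceil_pos_ge0.
have T0 : 0 <= 2 * P / (beta * eps) by apply: divr_ge0; nra.
have U00 : 0 <= U0.
  rewrite /U0; apply: addr_ge0; apply: divr_ge0; try nra.
  by apply: mulr_ge0; [lra | rewrite exprn_ge0 // ltW].
have Gpos : forall k, eps < Dl k -> 0 < G k.
  by move=> k ek; apply: lt_le_trans (Hm k); apply: mf_gt0 => //; lra.
have descD : forall k, desc k -> eps < Dl k -> Dl k.+1 <= Dl k - beta * mf P (Dl k).
  move=> k dk ek; apply: le_trans (Hd k dk) _.
  have := Hm k; have := Gpos k ek. nra.
have Nul : forall k, (forall j, (j <= k)%N -> eps < Dl j) ->
    (nn k)%:R + (U (Dl k) - kap / G k) <= U (Dl 0%N).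
  elim=> [|k IH] H.
    rewrite /nn big_ord0 add0r.
    have : 0 <= kap / G 0%N by apply: divr_ge0; [lra | apply: ltW; apply: Gpos; exact: H].
    lra.
  have IH' := IH (fun j hj => H j (leqW hj)).
  have ek := H k (leqnSn k). have ek1 := H k.+1 (leqnn _).
  have G0 := Gpos k ek. have G1 := Gpos _ ek1.
  rewrite /nn big_ord_recr /= natrD -/(nn k).
  case dk: (desc k) => /=.
    have Ud := U_desc P0 e0 b0 b1 k0 ek (lt_trans e0 ek1) (descD k dk ek).
    have m0 : 0 < mf P (Dl k) by apply: mf_gt0 => //; lra.
    have h1 : kap / G k <= kap / mf P (Dl k).
      by apply: ler_wpM2l; [lra | apply: invle => //; exact: Hm].
    have h2 : 0 <= kap / G k.+1 by apply: divr_ge0; lra.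
    rewrite /U in IH' *. lra.
  have [eD hG] := Hn k (negbT dk).
  have := null_inv k0 G0 G1 hG.
  rewrite eD in IH' *. lra.
have Nulb : forall k, (forall j, (j <= k)%N -> eps < Dl j) -> (nn k)%:R <= U0.
  move=> k H; have := Nul k H.
  have := U_pos P0 e0 b0 b1 k0 (H k (leqnn k)).
  have := U_bnd P0 e0 b0 b1 k0 (H 0%N isT).
  have : kap / G k <= kap / mf P (Dl k).
    apply: ler_wpM2l; first lra.
    apply: invle; last exact: Hm.
    apply: mf_gt0 => //; have := H k (leqnn k); lra.
  rewrite /U /U0. lra.
have lnlt : forall a b : R, 0 < a -> a < b -> ln a < ln b.
  by move=> a b a0 ab; rewrite ltr_ln ?posrE //; lra.
have lnstep : forall a b : R, 0 < a -> 0 < b -> b <= a - beta * (a / 2) ->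
    ln b - ln a <= - (beta / 2).
  move=> a b a0 bb0 hb.
  rewrite -ln_div ?posrE //.
  have -> : b / a = 1 + (b / a - 1) by ring.
  have hba : b / a <= 1 - beta / 2.
    by rewrite ler_pdivrMr //; nra.
  apply: le_trans (le_ln1Dx _) _; last lra.
  have : 0 < b / a by apply: divr_gt0.
  lra.
have Des : forall k, (forall j, (j <= k)%N -> eps < Dl j) ->
    (P < Dl k -> (nd k)%:R <= 2 / beta * (ln (Dl 0%N) - ln (Dl k))) /\
    (Dl k <= P -> (nd k)%:R + 2 * P / beta * (eps^-1 - (Dl k)^-1)
                  <= C + 2 * P / (beta * eps) - 2 / beta).
  elim=> [|k IH] H.
    rewrite /nd big_ord0 subrr mulr0; split => // DP.
    have hu := invle (lt_trans e0 (H 0%N isT)) DP.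
    have -> : 2 * P / (beta * eps) = 2 * P / beta * eps^-1 by field; lra.
    have : 2 / beta <= 2 * P / beta * (Dl 0%N)^-1.
      have -> : 2 / beta = 2 * P / beta * P^-1 by field; lra.
      apply: ler_wpM2l => //; apply: divr_ge0; lra.
    lra.
  have IH' := IH (fun j hj => H j (leqW hj)).
  have ek1 := H k.+1 (leqnn _).
  have ek' := H k (leqnSn k).
  rewrite /nd big_ord_recr /= natrD -/(nd k).
  case dk: (desc k) => /=; last first.
    have [eD _] := Hn k (negbT dk).
    by rewrite addr0 eD.
  have hD := descD k dk ek'.
  have D0 : 0 < Dl k by lra.
  have D10 : 0 < Dl k.+1 by lra.
  have [IH1 IH2] := IH'.
  case: (lerP (Dl k) P) => DP.
    move: hD; rewrite /mf DP => hD.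
    have hK := K1 P0 b0 D0 D10 hD.
    have D1P : Dl k.+1 <= P.
      have : 0 <= beta * (Dl k ^+ 2 / (2 * P)) by apply: mulr_ge0; [lra|apply: divr_ge0; nra].
      lra.
    split => [hh|_]; first lra.
    have := IH2 DP.
    have : 2 * P / beta * ((Dl k)^-1 + beta / (2 * P)) <= 2 * P / beta * (Dl k.+1)^-1.
      apply: ler_wpM2l => //; apply: divr_ge0; lra.
    have -> : 2 * P / beta * ((Dl k)^-1 + beta / (2 * P)) = 2 * P / beta * (Dl k)^-1 + 1.
      by field; lra.
    lra.
  have PDk : ~~ (Dl k <= P) by rewrite -ltNge.
  move: hD; rewrite /mf (negbTE PDk) => hD.
  have ndL : (nd k)%:R < 2 * ln (Dl 0%N / P) / beta.
    rewrite ln_div ?posrE //; last by have := H 0%N isT; lra.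
    apply: le_lt_trans (IH1 DP) _.
    have := lnlt _ _ P0 DP.
    have -> : 2 * (ln (Dl 0%N) - ln P) / beta = 2 / beta * (ln (Dl 0%N) - ln P) by ring.
    move=> hl; rewrite ltr_pM2l ?divr_gt0 //; lra.
  split => [hh|D1P].
    have := lnstep _ _ D0 D10 hD.
    have := IH1 DP.
    have -> : 2 / beta * (ln (Dl 0%N) - ln (Dl k.+1))
       = 2 / beta * (ln (Dl 0%N) - ln (Dl k)) + 2 / beta * (- (ln (Dl k.+1) - ln (Dl k))) by ring.
    move=> h1 h2.
    have : 2 / beta * (beta / 2) <= 2 / beta * (- (ln (Dl k.+1) - ln (Dl k))).
      apply: ler_wpM2l; [apply: divr_ge0; lra | lra].
    have -> : 2 / beta * (beta / 2) = 1 by field; lra.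
    lra.
  have hC := ceil_pos_S ndL.
  rewrite -/C in hC.
  have hu := invle D10 D1P.
  have -> : 2 * P / (beta * eps) = 2 * P / beta * eps^-1 by field; lra.
  have : 2 / beta <= 2 * P / beta * (Dl k.+1)^-1.
    have -> : 2 / beta = 2 * P / beta * P^-1 by field; lra.
    apply: ler_wpM2l => //; apply: divr_ge0; lra.
  rewrite -natr1 in hC.
  lra.
have Desb : forall k, (forall j, (j <= k)%N -> eps < Dl j) ->
    (nd k.+1)%:R <= 2 * P / (beta * eps) + C.
  move=> k H.
  have [IH1 IH2] := Des k H.
  have ek := H k (leqnn k).
  have hS : (nd k.+1)%:R <= (nd k)%:R + 1 :> R.
    rewrite /nd big_ord_recr /= natrD -/(nd k) lerD2l.
    by case: (desc k).
  case: (lerP (Dl k) P) => DP.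
    have := IH2 DP.
    have hu := invle e0 (ltW ek).
    have : 0 <= 2 * P / beta * (eps^-1 - (Dl k)^-1) by apply: mulr_ge0; [apply: divr_ge0; lra | lra].
    have : 1 <= 2 / beta by rewrite ler_pdivlMr //; lra.
    lra.
  have ndL : (nd k)%:R < 2 * ln (Dl 0%N / P) / beta.
    rewrite ln_div ?posrE //; last by have := H 0%N isT; lra.
    apply: le_lt_trans (IH1 DP) _.
    have := lnlt _ _ P0 DP.
    have -> : 2 * (ln (Dl 0%N) - ln P) / beta = 2 / beta * (ln (Dl 0%N) - ln P) by ring.
    move=> hl; rewrite ltr_pM2l ?divr_gt0 //; lra.
  have hC := ceil_pos_S ndL.
  rewrite -/C -natr1 in hC.
  lra.
have sumnd : forall k, (nd k + nn k)%N = k by move=> k; exact: sum_compl.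
have exK : exists K, Dl K <= eps.
  apply: contrapT => hne.
  have hall : forall k, eps < Dl k.
    by move=> k; rewrite ltNge; apply/negP => hk; apply: hne; exists k.
  have hall' : forall k j, (j <= k)%N -> eps < Dl j by move=> k j _; exact: hall.
  set n := Num.Def.archi_bound (2 * P / (beta * eps) + C + U0).
  have := archi_boundP (_ : 0 <= 2 * P / (beta * eps) + C + U0).
  rewrite -/n => hn.
  clearbody n.
  have h1 := Desb n (hall' n).
  have h2 := Nulb n (hall' n).
  have h3 : (nd n)%:R <= (nd n.+1)%:R :> R.
    by rewrite ler_nat /nd big_ord_recr /= leq_addr.

  have := sumnd n; move/(congr1 (fun m => m%:R : R)); rewrite natrD => h4.
  have : (n%:R : R) <= 2 * P / (beta * eps) + C + U0 by lra.
  lra.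
have exK' : exists K, (Dl K <= eps) by [].
case: (ex_minnP exK') => K hK hmin.
exists K; split => //.
- move=> k hk; rewrite ltNge; apply/negP => hk'.
  by have := hmin k hk'; rewrite leqNgt hk.
- rewrite card_sum -/(nd K).
  case: K hK hmin => [|k] hK hmin.
    by rewrite /nd big_ord0; lra.
  apply: Desb => j hj; rewrite ltNge; apply/negP => hj'.
  by have := hmin j hj'; rewrite leqNgt ltnS hj.
- rewrite (card_sum K (fun k => ~~ desc k)) -/(nn K).
  case: K hK hmin => [|k] hK hmin.
    by rewrite /nn big_ord0; lra.
  have H : forall j, (j <= k)%N -> eps < Dl j.
    move=> j hj; rewrite ltNge; apply/negP => hj'.
    by have := hmin j hj'; rewrite leqNgt ltnS hj.
  have dk : desc k.
    apply/negPn/negP => dk.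
    have [eD _] := Hn k dk.
    have := H k (leqnn k); rewrite -eD; lra.
  rewrite /nn big_ord_recr /= dk addn0.
  exact: Nulb.
Qed.

Lemma lim0 (R : realType) (a b : R) : 0 <= b ->
  (forall t, 0 < t -> t <= 1 -> 0 <= a + t * b) -> 0 <= a.
Proof.
move=> b0 H; rewrite leNgt; apply/negP => a0.
have ba : 0 < b - a by lra.
have t0 : 0 < - a / (b - a) by apply: divr_gt0; lra.
have t1 : - a / (b - a) <= 1 by rewrite ler_pdivrMr //; lra.
have := H _ t0 t1.
have -> : a + - a / (b - a) * b = - (a ^+ 2) / (b - a) by field; lra.
rewrite pmulr_lge0 ?invr_gt0 //; nra.
Qed.

Lemma nsqB (R : realType) (d : nat) (u v : 'rV[R]_d) :
  dotp (u - v) (u - v) = dotp (v - u) (v - u).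
Proof. by rewrite -opprB dotpNl dotpC dotpNl opprK. Qed.

Lemma nsqZ (R : realType) (d : nat) (t : R) (u : 'rV[R]_d) :
  dotp (t *: u) (t *: u) = t ^+ 2 * dotp u u.
Proof. by rewrite dotpZl dotpZr mulrA expr2. Qed.

Lemma opt_sub (R : realType) (d : nat) (h : 'rV[R]_d -> R) (rho : R) (X Z : 'rV[R]_d) :
  0 < rho -> convex_fun h ->
  (forall w, h Z + rho / 2 * enorm (Z - X) ^+ 2 <= h w + rho / 2 * enorm (w - X) ^+ 2) ->
  forall w, h Z + dotp (rho *: (X - Z)) (w - Z) <= h w.
Proof.
move=> r0 hc ha w.
set u := w - Z.
suff : 0 <= h w - h Z - dotp (rho *: (X - Z)) u by lra.
apply: (@lim0 _ _ (rho / 2 * dotp u u)); first by apply: mulr_ge0; [lra | exact: dotp_ge0].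
move=> t t0 t1.
set y := t *: w + (1 - t) *: Z.
have hy := hc w Z t (ltW t0) t1.
have hm := ha y.
have ey : y - X = (Z - X) + t *: u.
  by apply/rowP => i; rewrite !mxE; ring.
rewrite !enorm_sq ey (nsqD (Z - X) (t *: u)) dotpZr nsqZ in hm.
rewrite -/y in hy.
have e2 : dotp (rho *: (X - Z)) u = - (rho * dotp (Z - X) u).
  by rewrite dotpZl -opprB dotpNl mulrN.
rewrite e2.
have : 0 <= t * (h w - h Z + rho * dotp (Z - X) u + t * (rho / 2 * dotp u u)).
  have -> : t * (h w - h Z + rho * dotp (Z - X) u + t * (rho / 2 * dotp u u))
     = (t * h w + (1 - t) * h Z) - h Z + rho / 2 * (2 * (t * dotp (Z - X) u) + t ^+ 2 * dotp u u)
     by field.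
  lra.
rewrite pmulr_rge0 //; lra.
Qed.

Lemma sub_bound (R : realType) (d : nat) (f h : 'rV[R]_d -> R) (M : R) (z s : 'rV[R]_d) :
  0 < M -> lipschitz_with f M -> (forall w, h w <= f w) ->
  (forall w, h z + dotp s (w - z) <= h w) -> dotp s s <= M ^+ 2.
Proof.
move=> M0 hL hle hs.
set n := enorm s.
have n0 : 0 <= n := enorm_ge0 s.
have nn : dotp s s = n ^+ 2 by rewrite enorm_sq.
suff : n <= M by rewrite nn => h1; rewrite lerXn2r ?nnegrE //; lra.
rewrite leNgt; apply/negP => Mn.
set E := f z - h z.
have E0 : 0 <= E by rewrite /E subr_ge0.
set t := (E + 1) / (n * (n - M)).
have nM0 : 0 < n * (n - M) by apply: mulr_gt0; lra.
have t0 : 0 < t by apply: divr_gt0; lra.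
have h1 := hs (z + t *: s).
have ew : z + t *: s - z = t *: s by rewrite addrC addKr.
rewrite ew dotpZr nn in h1.
have h2 := hle (z + t *: s).
have h3 := hL (z + t *: s) z.
rewrite ew (enormZ _ (ltW t0)) -/n in h3.
have h4 : f (z + t *: s) - f z <= M * (t * n) by apply: le_trans (ler_norm _) h3.
have ht : t * (n * (n - M)) = E + 1 by rewrite /t mulrAC -mulrA mulfV ?mulr1 // lt0r_neq0.
have h5 : t * n ^+ 2 <= E + M * (t * n) by rewrite /E; lra.
have : t * (n * (n - M)) = t * n ^+ 2 - M * (t * n) by ring.
lra.
Qed.

Lemma sq_lb (R : realType) (d : nat) (rho : R) (g w : 'rV[R]_d) : 0 < rho ->
  - (dotp g g / (2 * rho)) <= dotp g w + rho / 2 * dotp w w.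
Proof.
move=> r0.
have h := dotp_ge0 (rho *: w + g).
rewrite nsqD nsqZ dotpZl (dotpC w g) in h.
have -> : - (dotp g g / (2 * rho)) = dotp g w + rho / 2 * dotp w w
          - (rho ^+ 2 * dotp w w + 2 * (rho * dotp g w) + dotp g g) / (2 * rho).
  by field; lra.
have : 0 <= (rho ^+ 2 * dotp w w + 2 * (rho * dotp g w) + dotp g g) / (2 * rho).
  by apply: divr_ge0 => //; lra.
lra.
Qed.

Lemma inf_sq (R : realType) (E : set R) (c A : R) :
  (exists e, E e) -> (forall e, E e -> 0 <= e) -> 0 <= c ->
  (forall e, E e -> A <= c * e ^+ 2) -> A <= c * (inf E) ^+ 2.
Proof.
move=> [e0 He0] Epos c0 H.
have d0 : 0 <= inf E by apply: lb_le_inf; [exists e0 | move=> y Ey; exact: Epos].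
have hinf : has_inf E by split; [exists e0 | exists 0 => y Ey; exact: Epos].
rewrite leNgt; apply/negP => hA.
case: (ltrP 0 c) => c0'; last first.
  have c00 : c = 0 by lra.
  have := H _ He0; rewrite c00 mul0r. rewrite c00 mul0r in hA. lra.
set gam := A - c * inf E ^+ 2.
have g0 : 0 < gam by rewrite /gam; lra.
set eta := Num.min 1 (gam / (c * (2 * inf E + 1))).
have den : 0 < c * (2 * inf E + 1) by apply: mulr_gt0; lra.
have eta0 : 0 < eta by rewrite /eta lt_min ltr01 /= divr_gt0.
have eta1 : eta <= 1 by rewrite /eta ge_min lexx.
have eta2 : eta * (c * (2 * inf E + 1)) <= gam.
  by rewrite -ler_pdivlMr // /eta ge_min lexx orbT.
have [e Ee elt] := inf_adherent eta0 hinf.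
have h8 := H _ Ee.
have ee := Epos _ Ee.
have h6 : e ^+ 2 < (inf E + eta) ^+ 2 by rewrite ltrXn2r ?nnegrE //; lra.
have h7 : c * e ^+ 2 < c * (inf E + eta) ^+ 2 by rewrite ltr_pM2l.
have h9 : eta ^+ 2 <= eta by nra.
have h11 := ler_wpM2l (ltW c0') h9.
have h10 : c * (inf E + eta) ^+ 2 <= c * inf E ^+ 2 + eta * (c * (2 * inf E + 1)).
  have -> : c * (inf E + eta) ^+ 2 = c * inf E ^+ 2 + 2 * c * inf E * eta + c * eta ^+ 2 by ring.
  have -> : eta * (c * (2 * inf E + 1)) = 2 * c * inf E * eta + c * eta by ring.
  lra.
rewrite /gam in eta2. lra.
Qed.

Lemma dotpNr (R : realType) (d : nat) (u v : 'rV[R]_d) : dotp v (- u) = - dotp v u.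
Proof. by rewrite dotpC dotpNl dotpC. Qed.

Lemma dotp_par (R : realType) (d : nat) (g s : 'rV[R]_d) :
  dotp (g - s) (g - s) <= 2 * dotp g g + 2 * dotp s s.
Proof.
have h1 := nsqD g (- s). have h2 := nsqD g s.
rewrite dotpNr dotpNl dotpNr opprK in h1.
have := dotp_ge0 (g + s). lra.
Qed.

Unset Implicit Arguments.
Local Open Scope classical_set_scope.

Lemma Ec (K : nat) (p : nat -> bool) :
  #|[set k : 'I_K | p k]| = #|[set k : 'I_K | p k]%SET|.
Proof.
apply: eq_card => i.
by rewrite inE; apply/idP/idP; [move/set_mem | move=> h; apply/mem_set].
Qed.

Theorem theorem1 (R : realType) (d : nat) (f : 'rV[R]_d -> R) (M : R)
  (orc : 'rV[R]_d -> 'rV[R]_d) (beta rho : R) (x0 : 'rV[R]_d)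
  (x z : nat -> 'rV[R]_d) (fm : nat -> 'rV[R]_d -> R) (xs : 'rV[R]_d) :
  convex_fun f ->
  lipschitz_with f M ->
  (forall y, is_subgrad f y (orc y)) ->
  xs \in argmin_set f ->
  0 < beta -> beta < 1 -> 0 < rho ->
  PBM_run f orc beta rho x0 x z fm ->
  let fstar := f xs in
  let Dset := [set dist_set (x k) (argmin_set f) ^+ 2 | k in [set: nat]] in
  has_ubound Dset ->
  let D2 := sup Dset in
  0 < D2 ->
  forall eps : R, 0 < eps -> eps <= f x0 - fstar ->
  exists K : nat,
    [/\ f (x K) - fstar <= eps,
        (forall k, (k < K)%N -> eps < f (x k) - fstar),
        (n_descent f beta x z fm K)%:R
          <= 2 * rho * D2 / (beta * eps)
             + ceil_pos (2 * ln ((f x0 - fstar) / (rho * D2)) / beta) &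
        (n_null f beta x z fm K)%:R
          <= 48 * rho * M ^+ 2 * D2 ^+ 2 / (beta * (1 - beta) ^+ 2 * eps ^+ 3)
             + 32 * M ^+ 2 / (beta * (1 - beta) ^+ 2 * rho ^+ 2 * D2)].
Proof.
move=> hfc hL hsub hxs b0 b1 r0 hrun fstar Dset hub D2 D20 eps e0 heps.
case: hrun => [[hx0 hz0] hfm0 [hconv hargmin] hstep [hle hcut hagg]].
have hxsm : forall w, f xs <= f w by have := set_mem hxs.
have M0 : 0 < M.
  rewrite ltNge; apply/negP => M0.
  have hn := enorm_ge0 (x0 - xs).
  have hl := hL x0 xs.
  have : `|f x0 - f xs| <= 0 by apply: le_trans hl _; nra.
  rewrite normr_le0 subr_eq0 => /eqP e1.
  rewrite /fstar e1 in heps; lra.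
set Dl := fun k => f (x k) - fstar.
set phi := fun k => fm k (z k.+1) + rho / 2 * dotp (z k.+1 - x k) (z k.+1 - x k).
set G := fun k => f (x k) - phi k.
have hopt : forall k w, fm k (z k.+1) + dotp (rho *: (x k - z k.+1)) (w - z k.+1) <= fm k w.
  by move=> k; apply: opt_sub => //; exact: hargmin.
have hgb : forall y, dotp (orc y) (orc y) <= M ^+ 2.
  by move=> y; apply: (sub_bound (h := f)) M0 hL (fun w => lexx _) (hsub y).
have hsb : forall k, dotp (rho *: (x k - z k.+1)) (rho *: (x k - z k.+1)) <= M ^+ 2.
  by move=> k; apply: sub_bound M0 hL (hle k) (hopt k).
have hDl0 : forall k, 0 <= Dl k by move=> k; rewrite /Dl /fstar subr_ge0.
have G3 : forall k t, 0 <= t -> t <= 1 -> t * Dl k - rho / 2 * t ^+ 2 * D2 <= G k.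
  move=> k t t0 t1.
  set X := x k.
  have c0 : 0 <= rho / 2 * t ^+ 2 by apply: mulr_ge0; [lra | exact: sqr_ge0].
  suff : t * Dl k - G k <= rho / 2 * t ^+ 2 * dist_set X (argmin_set f) ^+ 2.
    have : dist_set X (argmin_set f) ^+ 2 <= D2.
      by apply: (ub_le_sup hub); exists k.
    move=> hD hh.
    have := ler_wpM2l c0 hD. lra.
  rewrite /dist_set; apply: inf_sq => //.
  - by exists (enorm (X - xs)); exists xs.
  - by move=> e [y _ <-]; exact: enorm_ge0.
  move=> e [y Sy <-].
  have fy : f y = fstar by apply/eqP; rewrite eq_le Sy hxsm.
  set yy := t *: y + (1 - t) *: X.
  have hy := hfc y X t t0 t1.
  have hm := hargmin k yy.
  rewrite !enorm_sq -/X in hm.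
  have eyy : yy - X = t *: (y - X) by apply/rowP => i; rewrite !mxE; ring.
  rewrite eyy nsqZ (nsqB y X) in hm.
  have := hle k yy.
  rewrite /G /phi /Dl -/X !enorm_sq.
  rewrite -/yy fy in hy.
  lra.
set P := rho * D2.
have P0 : 0 < P by rewrite /P mulr_gt0.
have Hm : forall k, mf P (Dl k) <= G k.
  move=> k; rewrite /mf; case: ifP => DP.
    have t0 : 0 <= Dl k / P by apply: divr_ge0 => //; lra.
    have t1 : Dl k / P <= 1 by rewrite ler_pdivrMr //; lra.
    apply: le_trans (G3 k _ t0 t1).
    rewrite le_eqVlt; apply/orP; left; apply/eqP; rewrite /P; field; lra.
  apply: le_trans (G3 k 1 ler01 (lexx _)).
  have : P < Dl k by rewrite ltNge DP.
  rewrite /P; lra.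
set desc := descent_step f beta x z fm.
have Gle : forall k, G k <= f (x k) - fm k (z k.+1).
  move=> k; rewrite /G /phi.
  have := dotp_ge0 (z k.+1 - x k).
  have : 0 <= rho / 2 by lra.
  nra.
have Hd : forall k, desc k -> Dl k.+1 <= Dl k - beta * G k.
  move=> k dk.
  have hx : x k.+1 = z k.+1 by rewrite hstep; move: dk; rewrite /desc => ->.
  have := Gle k.
  move: dk; rewrite /desc /descent_step => /= dk.
  rewrite /Dl hx.
  nra.
set kap := 8 * M ^+ 2 / (rho * (1 - beta) ^+ 2).
have kap0 : 0 < kap by apply: divr_gt0; [nra | apply: mulr_gt0 => //; apply: exprn_gt0; lra].
have Gnn : forall k, 0 <= G k.
  move=> k; have := G3 k 0 (lexx _) ler01. by rewrite !mul0r expr0n /= mulr0 mul0r subr0.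
have Ngain : forall k, ~~ desc k -> G k <= M ^+ 2 / (2 * rho) ->
    G k ^+ 2 <= kap * (G k - G k.+1).
  move=> k nd Gu.
  have G0 := Gnn k.
  have hx : x k.+1 = x k by rewrite hstep; move: nd; rewrite /desc => /negbTE ->.
  have hc := hcut k (z k.+2).
  have ha := hagg k (z k.+2) nd.
  have hnull : f (x k) - f (z k.+1) < beta * (f (x k) - fm k (z k.+1)).
    by move: nd; rewrite /desc /descent_step -ltNge.
  have GZ := Gle k.
  have ev : z k.+2 - x k = (z k.+2 - z k.+1) + (z k.+1 - x k).
    by apply/rowP => i; rewrite !mxE; ring.
  have eG' : G k.+1 = f (x k) - (fm k.+1 (z k.+2) + rho / 2 *
      (dotp (z k.+2 - z k.+1) (z k.+2 - z k.+1) + 2 * dotp (z k.+2 - z k.+1) (z k.+1 - x k)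
       + dotp (z k.+1 - x k) (z k.+1 - x k))).
    by rewrite /G /phi hx ev nsqD.
  have eG : G k = f (x k) - (fm k (z k.+1) + rho / 2 * dotp (z k.+1 - x k) (z k.+1 - x k)) by [].
  have esW : dotp (rho *: (x k - z k.+1)) (z k.+2 - z k.+1)
      = - (rho * dotp (z k.+2 - z k.+1) (z k.+1 - x k)).
    by rewrite dotpZl -opprB dotpNl dotpC mulrN.
  rewrite esW in ha.
  set W := z k.+2 - z k.+1 in hc ha eG' esW *.
  set V := z k.+1 - x k in eG' esW eG ha *.
  set g := orc (z k.+1) in hc *.
  set s := rho *: (x k - z k.+1) in esW *.
  set theta := rho * (1 - beta) * G k / (4 * M ^+ 2).
  have th0 : 0 <= theta by apply: divr_ge0; [apply: mulr_ge0; nra | nra].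
  have th1 : theta <= 1.
    have hG : rho * G k <= M ^+ 2 / 2.
      have := ler_wpM2l (ltW r0) Gu.
      have -> : rho * (M ^+ 2 / (2 * rho)) = M ^+ 2 / 2 by field; lra.
      done.
    rewrite /theta ler_pdivrMr ?mul1r; last nra.
    have : 0 <= rho * G k by nra.
    nra.
  have sq := sq_lb (theta *: (g - s)) W r0.
  rewrite nsqZ dotpZl (dotpBl g s W) esW in sq.
  have par := dotp_par g s.
  have hg := hgb (z k.+1). rewrite -/g in hg.
  have hs := hsb k. rewrite -/s in hs.
  have h1 := ler_wpM2l th0 hc.
  have th1' : 0 <= 1 - theta by lra.
  have h2 := ler_wpM2l th1' ha.
  have hdel : (1 - beta) * G k <= f (z k.+1) - fm k (z k.+1) by nra.
  have h3 := ler_wpM2l th0 hdel.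
  have h4 : theta ^+ 2 * dotp (g - s) (g - s) / (2 * rho) <= theta ^+ 2 * (4 * M ^+ 2) / (2 * rho).
    apply: ler_wpM2r; first by rewrite invr_ge0; lra.
    apply: ler_wpM2l; first exact: sqr_ge0. lra.
  have key : G k.+1 <= G k - theta * ((1 - beta) * G k) + theta ^+ 2 * (4 * M ^+ 2) / (2 * rho).
    rewrite eG'.
    lra.
  have idt : theta * ((1 - beta) * G k) - theta ^+ 2 * (4 * M ^+ 2) / (2 * rho) = G k ^+ 2 / kap.
    rewrite /theta /kap; field.
    apply/and3P; split; apply/eqP; try lra; nra.
  have : G k ^+ 2 = kap * (G k ^+ 2 / kap) by field; lra.
  move=> ->; apply: ler_wpM2l; lra.
have Gcut : forall k gg, (forall y, f (x k) + dotp gg (y - x k) <= fm k y) ->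
    dotp gg gg <= M ^+ 2 -> G k <= M ^+ 2 / (2 * rho).
  move=> k gg hy hg.
  have h := hy (z k.+1).
  have sq := sq_lb gg (z k.+1 - x k) r0.
  have : dotp gg gg / (2 * rho) <= M ^+ 2 / (2 * rho).
    by apply: ler_wpM2r => //; rewrite invr_ge0; lra.
  rewrite /G /phi. lra.
have G5 : forall k, G k <= M ^+ 2 / (2 * rho).
  elim=> [|k IH].
    apply: (Gcut 0%N (orc x0)); last exact: hgb.
    by move=> y; rewrite hfm0 hx0.
  case dk: (desc k).
    have hx : x k.+1 = z k.+1 by rewrite hstep; move: dk; rewrite /desc => ->.
    apply: (Gcut k.+1 (orc (z k.+1))); last exact: hgb.
    by move=> y; rewrite hx; exact: hcut.
  have := Ngain k (negbT dk) IH.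
  have := Gnn k. have := Gnn k.+1.
  nra.
have Hn : forall k, ~~ desc k -> Dl k.+1 = Dl k /\ G k ^+ 2 <= kap * (G k - G k.+1).
  move=> k nd; split; last exact: Ngain k nd (G5 k).
  have hx : x k.+1 = x k by rewrite hstep; move: nd; rewrite /desc => /negbTE ->.
  by rewrite /Dl hx.
have [K [h1 h2 h3 h4]] := pbm_counting P0 e0 b0 b1 kap0 Hm Hd Hn.
exists K; split.
- exact: h1.
- exact: h2.
- rewrite /n_descent Ec (_ : 2 * rho * D2 = 2 * P); last by rewrite /P mulrA.
  rewrite /Dl hx0 in h3; exact: h3.
rewrite /n_null (Ec K (fun k => ~~ descent_step f beta x z fm k)); apply: le_trans h4 _.
have e1 : 4 * P ^+ 2 * kap / (beta * eps ^+ 3)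
    = 2 / 3 * (48 * rho * M ^+ 2 * D2 ^+ 2 / (beta * (1 - beta) ^+ 2 * eps ^+ 3)).
  rewrite /P /kap; field.
  apply/and4P; split; apply/eqP; try lra; nra.
have e2 : 4 * kap / (beta * P) = 32 * M ^+ 2 / (beta * (1 - beta) ^+ 2 * rho ^+ 2 * D2).
  rewrite /P /kap; field.
  apply/and4P; split; apply/eqP; try lra; nra.
have : 0 <= 48 * rho * M ^+ 2 * D2 ^+ 2 / (beta * (1 - beta) ^+ 2 * eps ^+ 3).
  apply: divr_ge0; first by apply: mulr_ge0; [nra | exact: sqr_ge0].
  apply: mulr_ge0; first by apply: mulr_ge0; [lra | exact: sqr_ge0].
  by apply: exprn_ge0; lra.
lra.
Qed.
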